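(* Let $k$ be a positive integer, $a\ge k+2$ an integer and $G=K_a\,\square\,K_a$. Then $\gamma_{P,k}(G/e)=a-k-1$ for every edge $e$ of $G$.
   Context: $K_a$ is the complete graph on $a$ vertices and $\square$ denotes the Cartesian product of graphs. For an edge $e=xy$, the contraction $G/e$ is obtained from $G-e$ by replacing $x$ and $y$ by a new vertex $v_{xy}$ adjacent to all vertices of $N_{G-e}(x)\cup N_{G-e}(y)$ (other than $x,y$). $N_G[v]$ is the closed neighbourhood of $v$, and $N_G[S]$ the union of closed neighbourhoods of vertices of $S$. For $S\subseteq V(G)$, define $\mathcal{P}^{0}_{G,k}(S)=N_G[S]$ and $\mathcal{P}^{i+1}_{G,k}(S)=\bigcup\{N_G[v] : v\in \mathcal{P}^{i}_{G,k}(S),\ |N_G[v]\setminus \mathcal{P}^{i}_{G,k}(S)|\le k\}$; these increase and stabilize to $\mathcal{P}^{\infty}_{G,k}(S)$. $S$ is a $k$-power dominating set if $\mathcal{P}^{\infty}_{G,k}(S)=V(G)$; $\gamma_{P,k}(G)$ is the minimum size of such a set. *)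

(* Defs.v *)
From mathcomp Require Import all_boot all_order.
Set Implicit Arguments. Unset Strict Implicit. Unset Printing Implicit Defensive.

Section PowerDom.
Variables (T : finType) (adj : rel T).

Definition cnbh (v : T) : {set T} := [set u | (u == v) || adj v u].
Definition cnbhS (S : {set T}) : {set T} := \bigcup_(v in S) cnbh v.

Definition pstep (k : nat) (P : {set T}) : {set T} :=
  \bigcup_(v in P | #|cnbh v :\: P| <= k) cnbh v.

Definition pdom (k : nat) (S : {set T}) (i : nat) : {set T} :=
  iter i (pstep k) (cnbhS S).

Definition kpds (k : nat) (S : {set T}) : Prop :=
  exists i, pdom k S i = [set: T].

Definition is_gammaPk (k n : nat) : Prop :=
  (exists S : {set T}, kpds k S /\ #|S| = n) /\
  (forall S : {set T}, kpds k S -> n <= #|S|).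
End PowerDom.

Definition KaKa_adj (a : nat) : rel ('I_a * 'I_a) :=
  fun u w => ((u.1 == w.1) && (u.2 != w.2)) || ((u.2 == w.2) && (u.1 != w.1)).

(* Contraction G/e of the edge xy: vertices of G other than x,y (Some _),
   plus the new vertex v_xy (None). *)
Section Contraction.
Variables (T : finType) (adj : rel T) (x y : T).
Definition cvert := option {v : T | (v != x) && (v != y)}.
Definition contract_adj : rel cvert :=
  fun u w => match u, w with
  | Some u', Some w' => adj (val u') (val w')
  | None, Some w' => adj x (val w') || adj y (val w')
  | Some u', None => adj (val u') x || adj (val u') y
  | None, None => false
  end.
End Contraction.
Arguments contract_adj {T} adj x y.

(* Main.v *)
Require Import Defs.
From mathcomp Require Import all_boot all_order zify.
Set Implicit Arguments. Unset Strict Implicit. Unset Printing Implicit Defensive.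

Lemma pstepS (T : finType) (adj : rel T) k (P P' : {set T}) :
  P \subset P' -> pstep adj k P \subset pstep adj k P'.
Proof.
move=> sPP'; apply/bigcupsP => w /andP [wP hw].
apply: (bigcup_sup w); rewrite (subsetP sPP') //=.
apply: leq_trans hw; apply: subset_leq_card; exact: setDS.
Qed.

Section Main.
Variables (a k : nat) (sw : bool) (x y : 'I_a * 'I_a).
Local Notation V := ('I_a * 'I_a)%type.
Definition pp (t : V) := if sw then t.2 else t.1.
Definition qq (t : V) := if sw then t.1 else t.2.
Definition mk (i j : 'I_a) : V := if sw then (j, i) else (i, j).
Lemma pmk i j : pp (mk i j) = i. Proof. by rewrite /pp /mk; case: sw. Qed.
Lemma qmk i j : qq (mk i j) = j. Proof. by rewrite /qq /mk; case: sw. Qed.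
Lemma mkpq t : mk (pp t) (qq t) = t. Proof. by rewrite /pp /qq /mk; case: sw; case: t. Qed.
Lemma pq_inj t u : pp t = pp u -> qq t = qq u -> t = u.
Proof. by move=> e1 e2; rewrite -(mkpq t) -(mkpq u) e1 e2. Qed.

Lemma cnbhG t u : (u \in cnbh (@KaKa_adj a) t) = (pp u == pp t) || (qq u == qq t).
Proof.
rewrite inE /KaKa_adj /pp /qq; case: t => t1 t2; case: u => u1 u2 /=.
rewrite xpair_eqE [t1 == _]eq_sym [t2 == _]eq_sym.
by case: sw; case: (u1 == t1); case: (u2 == t2).
Qed.

Hypotheses (hpxy : pp x = pp y) (hqxy : qq x != qq y).
Local Notation cv := (cvert x y).
Local Notation G := (cnbh (@KaKa_adj a)).
Local Notation hadj := (contract_adj (@KaKa_adj a) x y).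
Definition hh (t : V) : cv := insub t.
Local Notation xy := [set x; y].

Lemma hh_val (s : {v : V | (v != x) && (v != y)}) : hh (val s) = Some s.
Proof. exact: valK. Qed.

Lemma hhN t : t \in xy -> hh t = None.
Proof. by move=> H; rewrite /hh insubN // negb_and !negbK -in_set2. Qed.

Lemma hhS t : t \notin xy -> exists s : {v : V | (v != x) && (v != y)}, hh t = Some s /\ val s = t.
Proof.
move=> H; have Ht : (t != x) && (t != y) by move: H; rewrite in_set2 negb_or.
by exists (Sub t Ht); rewrite /hh insubT.
Qed.

Lemma hh_inj t t' : t \notin xy -> hh t = hh t' -> t = t'.
Proof.
move=> H; have [s [-> <-]] := hhS H.
case: (boolP (t' \in xy)) => H'; first by rewrite hhN.
by have [s' [-> <-]] := hhS H' => -[->].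
Qed.

Lemma memS (s : {v : V | (v != x) && (v != y)}) (A : {set V}) : (Some s \in hh @: A) = (val s \in A).
Proof.
apply/imsetP/idP => [[t tA e]|sA]; last by exists (val s); rewrite ?hh_val.
have Hs : val s \notin xy by rewrite in_set2 negb_or; exact: (valP s).
by rewrite -hh_val in e; rewrite (hh_inj Hs e).
Qed.

Lemma memN (A : {set V}) : (None \in hh @: A) = (x \in A) || (y \in A).
Proof.
apply/idP/idP => [/imsetP [t tA e]|].
  case: (boolP (t \in xy)) => Ht; last by have [s [e' _]] := hhS Ht; rewrite e' in e.
  by move: Ht; rewrite in_set2 => /orP [] /eqP <-; rewrite tA ?orbT.
case/orP => H; apply/imsetP; [exists x | exists y] => //; rewrite hhN // in_set2 eqxx ?orbT //.
Qed.

Lemma cnbhH t : cnbh hadj (hh t) = hh @: (if t \in xy then G x :|: G y else G t).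
Proof.
case: (boolP (t \in xy)) => Ht.
  rewrite hhN //; apply/setP => -[s|]; rewrite inE /=.
    rewrite memS /=; have /andP [n1 n2] := valP s.
    by rewrite !inE (negbTE n1) (negbTE n2).
  by rewrite memN !inE !eqxx.
have [s [-> <-]] := hhS Ht.
apply/setP => -[s'|]; rewrite inE /=.
  by rewrite memS inE val_eqE.
have /andP [n1 n2] := valP s.
by rewrite memN !inE [x == _]eq_sym [y == _]eq_sym (negbTE n1) (negbTE n2).
Qed.

Lemma count_lb (D : {set 'I_a}) (f : 'I_a -> cv) (X : {set cv}) :
  {in D &, injective f} -> (forall j, j \in D -> f j \in X) -> #|D| <= #|X|.
Proof.
move=> fi fX; rewrite -(card_in_imset fi); apply: subset_leq_card.
by apply/subsetP => u /imsetP [j jD ->]; exact: fX.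
Qed.

Lemma cardC_ord (A : {set 'I_a}) : #|~: A| = a - #|A|.
Proof. by rewrite cardsCs setCK card_ord. Qed.

Lemma exists_out (A : {set 'I_a}) : #|A| < a -> exists i, i \notin A.
Proof.
move=> H; have : 0 < #|~: A| by rewrite cardC_ord; lia.
by rewrite card_gt0 => /set0Pn [i]; rewrite inE; exists i.
Qed.

Lemma hh_surj (u : cv) : exists t, u = hh t.
Proof.
case: u => [s|]; first by exists (val s); rewrite hh_val.
by exists x; rewrite hhN // in_set2 eqxx.
Qed.

Lemma mk_notxy i j : i != pp x -> mk i j \notin xy.
Proof.
move=> H; rewrite in_set2 negb_or; apply/andP; split; apply/eqP => e;
  [move: H | move: H; rewrite hpxy]; rewrite -e pmk eqxx //.
Qed.

Ltac gen_cards := repeat match goal with |- context [#|?A|] => let n := fresh "n" in set n := #|A| end.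
Section Lower.
Variable S : {set cv}.
Hypothesis hS : #|S| + k + 2 <= a.
Ltac crd := have := hS; gen_cards; lia.

Definition rowf (u : cv) : 'I_a := if u is Some s then pp (val s) else pp x.
Definition colf (u : cv) : 'I_a := if u is Some s then qq (val s) else qq x.
Definition RR := rowf @: S.
Definition CC := colf @: S :|: (if None \in S then [set qq y] else set0).
Definition QG := [set t | (pp t \in RR) || (qq t \in CC)].
Definition QQ := hh @: QG.

Lemma card_RR : #|RR| <= #|S|.
Proof. exact: leq_imset_card. Qed.

Lemma card_CC : #|CC| <= #|S| + (None \in S).
Proof.
apply: leq_trans (leq_card_setU _ _) _; apply: leq_add; first exact: leq_imset_card.
by case: (None \in S); rewrite ?cards1 ?cards0.
Qed.

Lemma notin_Q t : t \notin QG -> t \notin xy -> hh t \notin QQ.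
Proof. by move=> H1 H2; have [s [-> e]] := hhS H2; rewrite memS e. Qed.

Lemma NS_Q : cnbhS hadj S \subset QQ.
Proof.
apply/bigcupsP => -[s|] uS.
  rewrite -hh_val cnbhH.
  have -> : (val s \in xy) = false.
    by apply/negbTE; rewrite in_set2 negb_or; exact: (valP s).
  apply: imsetS; apply/subsetP => t; rewrite cnbhG inE => /orP [] /eqP ->.
    by rewrite (imset_f rowf uS).
  by rewrite inE (imset_f colf uS) orbT.
rewrite -(@hhN x) ?in_set2 ?eqxx // cnbhH in_set2 eqxx /=.
apply: imsetS; apply/subsetP => t; rewrite inE !cnbhG inE => /orP [] /orP [] /eqP ->.
- by rewrite (imset_f rowf uS).
- by rewrite inE (imset_f colf uS) orbT.
- by rewrite -hpxy (imset_f rowf uS).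
- by rewrite !inE uS inE eqxx !orbT.
Qed.

Lemma col_unknown j : j \notin CC ->
  k < #|hh @: [set t | qq t == j] :\: QQ|.
Proof.
move=> Hj.
have : #|~: RR :\ pp x| <= #|hh @: [set t | qq t == j] :\: QQ|.
  apply: (@count_lb _ (fun i => hh (mk i j))).
    move=> i1 i2; rewrite !inE => /andP [n1 _] _ e.
    by have := hh_inj (mk_notxy j n1) e => /(congr1 pp); rewrite !pmk.
  move=> i; rewrite !inE => /andP [n1 n2]; rewrite notin_Q ?mk_notxy //=.
    by rewrite imset_f // inE qmk.
  by rewrite inE pmk qmk negb_or n2.
have := cardsD1 (pp x) (~: RR); rewrite cardC_ord.
have := card_RR; case: (pp x \in ~: RR) => /=; crd.
Qed.

Lemma row_unknown i : i \notin RR ->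
  k < #|hh @: [set t | pp t == i] :\: QQ|.
Proof.
move=> Hi; case: (eqVneq i (pp x)) => [ei|ni]; last first.
  have : #|~: CC| <= #|hh @: [set t | pp t == i] :\: QQ|.
    apply: (@count_lb _ (fun j => hh (mk i j))).
      move=> j1 j2 _ _ e.
      by have := hh_inj (mk_notxy j1 ni) e => /(congr1 qq); rewrite !qmk.
    move=> j; rewrite inE => n2; rewrite inE notin_Q ?mk_notxy //=.
      by rewrite imset_f // inE pmk.
    by rewrite inE pmk qmk negb_or n2 Hi.
  rewrite cardC_ord; have := card_CC; case: (None \in S) => /=; crd.
have NS : None \notin S.
  by apply: contra Hi => NS; rewrite ei (imset_f rowf NS).
have cC := card_CC; rewrite (negbTE NS) /= addn0 in cC.
subst i.
case: (boolP ((qq x \in CC) || (qq y \in CC))) => Hc.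
  have : #|~: (CC :|: [set qq x; qq y])| <= #|hh @: [set t | pp t == pp x] :\: QQ|.
    apply: (@count_lb _ (fun j => hh (mk (pp x) j))).
      move=> j1 j2; rewrite !inE !negb_or => /andP [_ /andP [n1 n2]] _ e.
      have nxy : mk (pp x) j1 \notin xy.
        rewrite in_set2 negb_or; apply/andP; split; apply/eqP => e';
         [move: n1 | move: n2]; rewrite -e' qmk eqxx //.
      by have := hh_inj nxy e => /(congr1 qq); rewrite !qmk.
    move=> j; rewrite in_setC in_setU negb_or in_set2 negb_or => /andP [n0 /andP [n1 n2]].
    have nxy : mk (pp x) j \notin xy.
      rewrite in_set2 negb_or; apply/andP; split; apply/eqP => e';
       [move: n1 | move: n2]; rewrite -e' qmk eqxx //.
    rewrite inE notin_Q //=; first by rewrite imset_f // inE pmk.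
    by rewrite inE pmk qmk negb_or n0 Hi.
  rewrite cardC_ord cardsU cards2 hqxy.
  have : 0 < #|CC :&: [set qq x; qq y]|.
    rewrite card_gt0; apply/set0Pn; case/orP: Hc => H; [exists (qq x) | exists (qq y)];
      by rewrite in_setI H in_set2 eqxx ?orbT.
  move: cC; crd.
rewrite negb_or in Hc; case/andP: Hc => Hc1 Hc2.
have xQ : x \notin QG by rewrite inE negb_or Hi Hc1.
have yQ : y \notin QG by rewrite inE negb_or -hpxy Hi Hc2.
have : #|~: CC :\ qq y| <= #|hh @: [set t | pp t == pp x] :\: QQ|.
  apply: (@count_lb _ (fun j => hh (mk (pp x) j))).
    move=> j1 j2; rewrite !inE => /andP [m1 _] /andP [m2 _] e.
    have key : forall j, j != qq y -> mk (pp x) j \in xy -> j = qq x.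
      move=> j nj; rewrite in_set2 => /orP [] /eqP e'.
        by rewrite -e' qmk.
      by move: nj; rewrite -e' qmk eqxx.
    case: (boolP (mk (pp x) j1 \in xy)) => h1.
      rewrite (hhN h1) in e.
      case: (boolP (mk (pp x) j2 \in xy)) => h2.
        by rewrite (key _ m1 h1) (key _ m2 h2).
      by have [s [e' _]] := hhS h2; rewrite e' in e.
    by have := hh_inj h1 e => /(congr1 qq); rewrite !qmk.
  move=> j; rewrite in_setD1 in_setC => /andP [m1 m2].
  rewrite in_setD; apply/andP; split; last by rewrite imset_f // inE pmk.
  case: (boolP (mk (pp x) j \in xy)) => h1.
    by rewrite (hhN h1) memN negb_or xQ yQ.
  by rewrite notin_Q // inE pmk qmk negb_or Hi m2.
have := cardsD1 (qq y) (~: CC); rewrite cardC_ord inE Hc2 /=.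
move: cC; crd.
Qed.

Lemma too_many (X Y Z : {set cv}) : X \subset Y -> k < #|X :\: Z| -> #|Y :\: Z| <= k -> False.
Proof.
move=> sXY H1 H2; have : #|X :\: Z| <= #|Y :\: Z| by apply/subset_leq_card/setSD.
lia.
Qed.

Lemma pstepQ : pstep hadj k QQ \subset QQ.
Proof.
apply/bigcupsP => w /andP [/imsetP [t tQ ->] hw].
have rowP : forall i, hh @: [set t | pp t == i] \subset cnbh hadj (hh t) -> i \in RR.
  move=> i sub; apply/negPn/negP => ni; exact: (too_many sub (row_unknown ni) hw).
have colP : forall j, hh @: [set t | qq t == j] \subset cnbh hadj (hh t) -> j \in CC.
  move=> j sub; apply/negPn/negP => nj; exact: (too_many sub (col_unknown nj) hw).
rewrite cnbhH; case: (boolP (t \in xy)) => Ht.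
  have sub0 : forall A : {set V}, A \subset G x :|: G y -> hh @: A \subset cnbh hadj (hh t).
    by move=> A sA; rewrite cnbhH Ht /=; apply: imsetS.
  have r1 : pp x \in RR.
    by apply: rowP; apply: sub0; apply/subsetP => u; rewrite inE in_setU cnbhG => ->.
  have c1 : qq x \in CC.
    by apply: colP; apply: sub0; apply/subsetP => u; rewrite inE in_setU cnbhG => ->; rewrite orbT.
  have c2 : qq y \in CC.
    by apply: colP; apply: sub0; apply/subsetP => u; rewrite inE in_setU !cnbhG => ->; rewrite !orbT.
  apply: imsetS; apply/subsetP => u; rewrite inE !cnbhG inE => /orP [] /orP [] /eqP ->;
    rewrite ?r1 ?c1 ?c2 ?orbT // -hpxy r1 //.
have r1 : pp t \in RR.
  by apply: rowP; rewrite cnbhH (negbTE Ht) /=; apply: imsetS; apply/subsetP => u; rewrite inE cnbhG => ->.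
have c1 : qq t \in CC.
  by apply: colP; rewrite cnbhH (negbTE Ht) /=; apply: imsetS; apply/subsetP => u; rewrite inE cnbhG => ->; rewrite orbT.
apply: imsetS; apply/subsetP => u; rewrite cnbhG inE => /orP [] /eqP ->; rewrite ?r1 ?c1 ?orbT //.
Qed.

Lemma pdomQ i : pdom hadj k S i \subset QQ.
Proof.
elim: i => [|i IH]; first exact: NS_Q.
rewrite /pdom iterS; apply: subset_trans (pstepS _ _ IH) pstepQ.
Qed.

Lemma not_kpds : ~ kpds hadj k S.
Proof.
case=> i Hi; have := pdomQ i; rewrite Hi.
have [i0 Hi0] : exists i0, i0 \notin RR :|: [set pp x].
  apply: exists_out; apply: leq_ltn_trans (leq_card_setU _ _) _.
  rewrite cards1; have := card_RR; crd.
have [j0 Hj0] : exists j0, j0 \notin CC.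
  apply: exists_out; have := card_CC; case: (None \in S) => /=; crd.
move: Hi0; rewrite inE negb_or inE => /andP [n1 n2].
have : hh (mk i0 j0) \notin QQ.
  by rewrite notin_Q ?mk_notxy // inE pmk qmk negb_or n1.
by move=> H /subsetP /(_ (hh (mk i0 j0)) (in_setT _)); rewrite (negbTE H).
Qed.
End Lower.

Lemma exists_sub (B : {set 'I_a}) n : n <= #|B| -> exists J : {set 'I_a}, J \subset B /\ #|J| = n.
Proof.
move=> H; exists [set j in take n (enum B)]; split.
  by apply/subsetP => j; rewrite inE => /mem_take; rewrite mem_enum.
rewrite cardsE; move/card_uniqP: (take_uniq n (enum_uniq (mem B))) => ->.
by rewrite size_takel // -cardE.
Qed.

Section Upper.
Hypothesis ha : k + 2 <= a.

Lemma upper : exists S, kpds hadj k S /\ #|S| = a - k - 1.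
Proof.
have [i0 ni0] : exists i0, i0 \notin [set pp x] by apply: exists_out; rewrite cards1; lia.
rewrite in_set1 in ni0.
have [J [sJ cJ]] : exists J : {set 'I_a}, J \subset ~: [set qq x; qq y] /\ #|J| = a - k - 2.
  apply: exists_sub; rewrite cardC_ord cards2 hqxy; lia.
pose f j := hh (mk i0 j).
have fnot : forall j, mk i0 j \notin xy := fun j => mk_notxy j ni0.
have hx : x \in xy by rewrite in_set2 eqxx.
have Nx : cnbh hadj None = hh @: (G x :|: G y) by rewrite -(hhN hx) cnbhH hx.
exists (None |: f @: J); split; last first.
  rewrite cardsU1 card_in_imset.
    have -> : None \notin f @: J.
      apply/imsetP => -[j _ e]; have [s [e' _]] := hhS (fnot j).
      by rewrite /f e' in e.
    rewrite cJ /=; lia.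
  move=> j1 j2 _ _ e; have := hh_inj (fnot j1) e => /(congr1 qq).
  by rewrite !qmk.
exists 1; rewrite /pdom /=; set P := cnbhS _ _.
have NP : cnbh hadj None \subset P by apply: bigcup_sup; rewrite setU11.
have JP : forall j, j \in J -> cnbh hadj (f j) \subset P.
  by move=> j jJ; apply: bigcup_sup; rewrite setU1r // imset_f.
apply/eqP; rewrite eqEsubset subsetT /=; apply/subsetP => u _.
have [t ->] := hh_surj u.
case: (boolP ((pp t == pp x) || (qq t == qq x) || (qq t == qq y))) => Ht.
  apply/bigcupP; exists None.
    rewrite (subsetP NP) /=; last by rewrite inE eqxx.
    have -> : cnbh hadj None :\: P = set0 by apply/eqP; rewrite setD_eq0.
    by rewrite cards0.
  rewrite Nx imset_f // in_setU !cnbhG -hpxy.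
  by case/orP: Ht => [/orP []|] ->; rewrite ?orbT.
rewrite !negb_or in Ht; case/andP: Ht => /andP [n1 n2] n3.
have wn : mk (pp t) (qq x) \notin xy := mk_notxy _ n1.
apply/bigcupP; exists (hh (mk (pp t) (qq x))); last first.
  by rewrite cnbhH (negbTE wn) /= imset_f // cnbhG pmk eqxx.
apply/andP; split.
  by apply: (subsetP NP); rewrite Nx imset_f // in_setU cnbhG qmk eqxx orbT.
have : cnbh hadj (hh (mk (pp t) (qq x))) :\: P \subset
    (fun j => hh (mk (pp t) j)) @: ~: (J :|: [set qq x; qq y]).
  apply/subsetP => v; rewrite in_setD => /andP [vP].
  rewrite cnbhH (negbTE wn) /= => /imsetP [t' t'G ev]; subst v.
  move: t'G; rewrite cnbhG pmk qmk => /orP [/eqP e1 | /eqP e2]; last first.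
    by move: vP; rewrite (subsetP NP) // Nx imset_f // in_setU cnbhG e2 eqxx orbT.
  apply/imsetP; exists (qq t'); last by rewrite -e1 mkpq.
  rewrite in_setC in_setU in_set2 negb_or; apply/andP; split.
    apply/negP => jJ; move: vP; rewrite (subsetP (JP _ jJ)) //.
    by rewrite /f cnbhH (negbTE (fnot _)) /= imset_f // cnbhG qmk eqxx orbT.
  apply/negP => /orP [] /eqP e; move: vP;
    by rewrite (subsetP NP) // Nx imset_f // in_setU !cnbhG e eqxx ?orbT.
move/subset_leq_card => h; apply: leq_trans h _; apply: leq_trans (leq_imset_card _ _) _.
rewrite cardC_ord cardsU cards2 hqxy.
have -> : J :&: [set qq x; qq y] = set0.
  apply/setP => j; rewrite in_setI in_set0; case jJ: (j \in J) => //=.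
  by move: (subsetP sJ _ jJ); rewrite in_setC => /negbTE.
rewrite cards0 cJ; lia.
Qed.
End Upper.
End Main.


Theorem mainTheorem8 (k a : nat) (hk : 0 < k) (ha : k + 2 <= a)
  (x y : 'I_a * 'I_a) (hxy : KaKa_adj x y) :
  is_gammaPk (contract_adj (@KaKa_adj a) x y) k (a - k - 1).
Proof.
have [sw [h1 h2]] : exists sw, pp sw x = pp sw y /\ qq sw x != qq sw y.
  move: hxy; rewrite /KaKa_adj => /orP [/andP [e n] | /andP [e n]].
    by exists false; rewrite /pp /qq /=; split; [exact/eqP | exact: n].
  by exists true; rewrite /pp /qq /=; split; [exact/eqP | exact: n].
split; first exact: (upper h1 h2 ha).
move=> S HS; rewrite leqNgt; apply/negP => lt.
apply: (not_kpds h1 h2 _ HS).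
have := lt; set n := #|S|; lia.
Qed.
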